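(* Let $R$ be a commutative ring, $I=(f_1,\dots,f_r)$, $\mathfrak a=(a_1,\dots,a_s)\subseteq I$, $\Phi=(c_{ij})$ an $r\times s$ matrix with $a_j=\sum_ic_{ij}f_i$, and $\Gamma_\bullet$ as in the context. Let $\langle Z_1(\mathbf f;R)\rangle$ denote the $R$-subalgebra of $K_\bullet(\mathbf f;R)$ generated by the Koszul cycles of degree one. Then $$\langle\Gamma_\bullet\cdot\langle Z_1(\mathbf f;R)\rangle\rangle_r=\operatorname{Fitt}_0(I/\mathfrak a).$$ In particular, if the algebra of Koszul cycles $Z_\bullet(\mathbf f;R)$ is generated by cycles of degree one, then $\operatorname{Kitt}(\mathfrak a,I)=\operatorname{Fitt}_0(I/\mathfrak a)$.
   Context: $K_\bullet(\mathbf f;R)$ is the Koszul DG algebra: exterior algebra over $R$ on $e_1,\dots,e_r$ with $\partial e_i=f_i$. $\zeta_j=\sum_ic_{ij}e_i$, $\Gamma_\bullet$ the subalgebra generated by $\zeta_1,\dots,\zeta_s$, $Z_\bullet=Z_\bullet(\mathbf f;R)$ the subalgebra of cycles. For graded subalgebras $A_\bullet,B_\bullet$, $\langle A_\bullet\cdot B_\bullet\rangle_r$ is the degree-$r$ part of the subalgebra they generate, i.e. the span of $x\wedge y$ with $x\in A_j$, $y\in B_{r-j}$, identified with an ideal of $R$ via $K_r=Re_1\wedge\cdots\wedge e_r\cong R$. $\operatorname{Kitt}(\mathfrak a,I):=\langle\Gamma_\bullet\cdot Z_\bullet\rangle_r$. $\operatorname{Fitt}_0$ is the zeroth Fitting ideal.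 *)

(* Defs.v *)
From HB Require Import structures.
From mathcomp Require Import all_boot all_order all_algebra.
Set Implicit Arguments. Unset Strict Implicit. Unset Printing Implicit Defensive.
Import GRing.Theory.
Local Open Scope ring_scope.

Definition is_ideal (R : comPzRingType) (J : R -> Prop) : Prop :=
  [/\ J 0, (forall x y, J x -> J y -> J (x + y)) & (forall a x, J x -> J (a * x))].

Definition ideal_gen (R : comPzRingType) (G : R -> Prop) : R -> Prop :=
  fun c => forall J, is_ideal J -> (forall y, G y -> J y) -> J c.

(* ---------- Exterior algebra  /\ R^r  with basis e_S, S ⊆ {0..r-1} ---------- *)
Definition ext (R : comPzRingType) (r : nat) := {ffun {set 'I_r} -> R}.

Definition ext_add (R : comPzRingType) (r : nat) (x y : ext R r) : ext R r := [ffun S => x S + y S].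
Definition ext_scale (R : comPzRingType) (r : nat) (a : R) (x : ext R r) : ext R r := [ffun S => a * x S].
Definition ext_one (R : comPzRingType) (r : nat) : ext R r := [ffun S => if S == set0 then 1 else 0].
Definition ext_e (R : comPzRingType) (r : nat) (i : 'I_r) : ext R r := [ffun S => if S == [set i] then 1 else 0].

(* sign of e_S /\ e_T = wsign S T * e_(S ∪ T) for disjoint S T:
   (-1)^(number of pairs s in S, t in T with t < s) *)
Definition wsign (R : comPzRingType) (r : nat) (S T : {set 'I_r}) : R :=
  (-1) ^+ #|[set p : 'I_r * 'I_r | [&& p.1 \in S, p.2 \in T & (val p.2 < val p.1)%N]]|.

Definition wedge (R : comPzRingType) (r : nat) (x y : ext R r) : ext R r :=
  [ffun U : {set 'I_r} => \sum_(S : {set 'I_r}) \sum_(T : {set 'I_r} | [disjoint S & T] && (S :|: T == U))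
               wsign R S T * x S * y T].

Definition homog (R : comPzRingType) (r : nat) (d : nat) (x : ext R r) : Prop := forall S : {set 'I_r}, #|S| != d -> x S = 0.

(* Koszul differential, d e_i = f_i, extended as a graded derivation:
   d(e_{t_1} /\ ... /\ e_{t_k}) = sum_k (-1)^(k-1) f_{t_k} e_{T \ t_k} *)
Definition koszul_d (R : comPzRingType) (r : nat) (f : 'I_r -> R) (x : ext R r) : ext R r :=
  [ffun S : {set 'I_r} => \sum_(i : 'I_r | i \notin S)
               (-1) ^+ #|[set t in S | (val t < val i)%N]| * f i * x (i |: S)].

Definition subalg_closed (R : comPzRingType) (r : nat) (P : ext R r -> Prop) : Prop :=
  [/\ P (ext_one R r),
      (forall x y, P x -> P y -> P (ext_add x y)),
      (forall a x, P x -> P (ext_scale a x)) &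
      (forall x y, P x -> P y -> P (wedge x y))].

Definition subalg_gen (R : comPzRingType) (r : nat) (G : ext R r -> Prop) : ext R r -> Prop :=
  fun x => forall P, subalg_closed P -> (forall y, G y -> P y) -> P x.

(* < A . B >_r : degree-r part of the algebra generated by A and B, i.e. the span of
   x /\ y with x in A_j, y in B_(r-j), identified with an ideal of R via K_r = R e_1..e_r *)
Definition prod_top (R : comPzRingType) (r : nat) (A B : ext R r -> Prop) : R -> Prop :=
  ideal_gen (fun c => exists (j : nat) (x y : ext R r),
     [/\ (j <= r)%N, A x /\ homog j x, B y /\ homog (r - j) y & c = wedge x y setT]).

Definition zeta (R : comPzRingType) (r : nat) s (c : 'M[R]_(r, s)) (j : 'I_s) : ext R r :=
  [ffun S : {set 'I_r} => \sum_(i : 'I_r) c i j * ext_e R i S].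

Definition Gamma (R : comPzRingType) (r : nat) s (c : 'M[R]_(r, s)) : ext R r -> Prop :=
  subalg_gen (fun x => exists j, x = zeta c j).

Definition cycles (R : comPzRingType) (r : nat) (f : 'I_r -> R) : ext R r -> Prop := fun x => koszul_d f x = 0.

Definition Z1 (R : comPzRingType) (r : nat) (f : 'I_r -> R) : ext R r -> Prop := fun x => homog 1 x /\ koszul_d f x = 0.
Definition Z1alg (R : comPzRingType) (r : nat) (f : 'I_r -> R) : ext R r -> Prop := subalg_gen (Z1 f).

Definition Kitt (R : comPzRingType) (r : nat) s (c : 'M[R]_(r, s)) (f : 'I_r -> R) : R -> Prop :=
  prod_top (Gamma c) (cycles f).

(* ---------- Fitt_0 (I / a) ----------
   I / a is generated by the images of f_1..f_r; its relation module is
   { v in R^r | sum_i v_i f_i in a }.  Fitt_0 is the ideal generated by the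
   r x r minors of matrices whose columns are relations. *)
Definition ideal_of_gens (R : comPzRingType) (s : nat) (a : 'I_s -> R) : R -> Prop :=
  ideal_gen (fun y => exists j, y = a j).

Definition quot_relation (R : comPzRingType) (r : nat) s (f : 'I_r -> R) (a : 'I_s -> R) (v : 'I_r -> R) : Prop :=
  ideal_of_gens a (\sum_i v i * f i).

Definition Fitt0_quot (R : comPzRingType) (r : nat) s (f : 'I_r -> R) (a : 'I_s -> R) : R -> Prop :=
  ideal_gen (fun c => exists M : 'M[R]_r,
     (forall k : 'I_r, quot_relation f a (fun i => M i k)) /\ c = \det M).

(* Main.v *)
Require Import Defs.
From mathcomp Require Import all_boot all_order all_algebra.
From mathcomp Require Import ring.
Set Implicit Arguments. Unset Strict Implicit. Unset Printing Implicit Defensive.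
Import GRing.Theory.
Local Open Scope ring_scope.

Section Ext.
Variable R : comPzRingType.
Variable r : nat.
Local Notation E := (ext R r).
Local Notation T := {set 'I_r}.

Definition ext0 : E := [ffun _ => 0].
Definition inv (S U : T) : nat :=
  #|[set p : 'I_r * 'I_r | [&& p.1 \in S, p.2 \in U & (val p.2 < val p.1)%N]]|.

Lemma wsignE (S U : T) : wsign R S U = (-1) ^+ inv S U.
Proof. by []. Qed.

Lemma wedgeE (x y : E) U : wedge x y U =
  \sum_(S : T) \sum_(V : T | [disjoint S & V] && (S :|: V == U)) wsign R S V * x S * y V.
Proof. by rewrite ffunE. Qed.

Lemma wedge_addl (x y z : E) : wedge (ext_add x y) z = ext_add (wedge x z) (wedge y z).
Proof.
apply/ffunP=> U; rewrite !ffunE -big_split /=; apply: eq_bigr => S _.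
rewrite -big_split /=; apply: eq_bigr => V _; rewrite ffunE; ring.
Qed.

Lemma wedge_addr (x y z : E) : wedge x (ext_add y z) = ext_add (wedge x y) (wedge x z).
Proof.
apply/ffunP=> U; rewrite !ffunE -big_split /=; apply: eq_bigr => S _.
rewrite -big_split /=; apply: eq_bigr => V _; rewrite ffunE; ring.
Qed.

Lemma wedge_scalel a (x y : E) : wedge (ext_scale a x) y = ext_scale a (wedge x y).
Proof.
apply/ffunP=> U; rewrite !ffunE mulr_sumr; apply: eq_bigr => S _.
rewrite mulr_sumr; apply: eq_bigr => V _; rewrite ffunE; ring.
Qed.

Lemma wedge_scaler a (x y : E) : wedge x (ext_scale a y) = ext_scale a (wedge x y).
Proof.
apply/ffunP=> U; rewrite !ffunE mulr_sumr; apply: eq_bigr => S _.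
rewrite mulr_sumr; apply: eq_bigr => V _; rewrite ffunE; ring.
Qed.

Lemma wedge0l (x : E) : wedge ext0 x = ext0.
Proof.
apply/ffunP=> U; rewrite !ffunE big1 // => S _; rewrite big1 // => V _.
by rewrite ffunE mulr0 mul0r.
Qed.

Lemma wedge0r (x : E) : wedge x ext0 = ext0.
Proof.
apply/ffunP=> U; rewrite !ffunE big1 // => S _; rewrite big1 // => V _.
by rewrite ffunE mulr0.
Qed.

Lemma inv0l U : inv set0 U = 0%N.
Proof. by apply/eqP; rewrite cards_eq0; apply/eqP/setP => p; rewrite !inE. Qed.
Lemma inv0r U : inv U set0 = 0%N.
Proof. by apply/eqP; rewrite cards_eq0; apply/eqP/setP => p; rewrite !inE andbF. Qed.

Lemma disj0l (A : T) : [disjoint set0 & A].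
Proof. by rewrite -setI_eq0 set0I. Qed.
Lemma disj0r (A : T) : [disjoint A & set0].
Proof. by rewrite -setI_eq0 setI0. Qed.

Lemma wedge1l (x : E) : wedge (ext_one R r) x = x.
Proof.
apply/ffunP=> U; rewrite !ffunE (bigD1 set0) //= [X in _ + X]big1 => [|S nS].
  rewrite addr0 (big_pred1 U) => [|V]; last first.
    by rewrite /= disj0l set0U.
  by rewrite ffunE eqxx wsignE inv0l expr0 !mul1r.
by rewrite big1 // => V _; rewrite ffunE (negPf nS) mulr0 mul0r.
Qed.

Lemma wedge1r (x : E) : wedge x (ext_one R r) = x.
Proof.
apply/ffunP=> U; rewrite !ffunE (bigD1 U) //= [X in _ + X]big1 => [|S nS].
  rewrite addr0 (big_pred1 set0) => [|V]; last first.
    rewrite /=; apply/andP/eqP => [[dUV /eqP eU]|->]; last by rewrite disj0r setU0.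
    have sVU : V \subset U by rewrite -eU subsetUr.
    by rewrite -(setIidPr sVU) disjoint_setI0.
  by rewrite ffunE eqxx wsignE inv0r expr0 mulr1 mul1r.
rewrite big1 // => V /andP[dSV /eqP eU]; rewrite ffunE.
case: eqP => [V0|]; last by rewrite mulr0.
by move: nS; rewrite -eU V0 setU0 eqxx.
Qed.

Lemma disjUl (S V C : T) : [disjoint S :|: V & C] = [disjoint S & C] && [disjoint V & C].
Proof. by rewrite -!setI_eq0 setIUl setU_eq0. Qed.
Lemma disjUr (S V C : T) : [disjoint C & S :|: V] = [disjoint C & S] && [disjoint C & V].
Proof. by rewrite -!setI_eq0 setIUr setU_eq0. Qed.

Lemma invUl (S V U : T) : [disjoint S & V] -> inv (S :|: V) U = (inv S U + inv V U)%N.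
Proof.
move=> dSV; rewrite /inv.
set A := [set p : 'I_r * 'I_r | _ ]; set B := [set p : 'I_r * 'I_r | _ ].
set C := [set p : 'I_r * 'I_r | _ ].
have -> : A = B :|: C by apply/setP => p; rewrite !inE andb_orl.
rewrite cardsU (_ : B :&: C = set0) ?cards0 ?subn0 //.
apply/setP => p; rewrite !inE.
case pS: (p.1 \in S) => //=; by rewrite (disjointFr dSV pS) //= andbF.
Qed.

Lemma invUr (S V U : T) : [disjoint V & U] -> inv S (V :|: U) = (inv S V + inv S U)%N.
Proof.
move=> dVU; rewrite /inv.
set A := [set p : 'I_r * 'I_r | _ ]; set B := [set p : 'I_r * 'I_r | _ ].
set C := [set p : 'I_r * 'I_r | _ ].
have -> : A = B :|: C.
  apply/setP => p; rewrite !inE; case: (p.1 \in S) => //=; case: (p.2 \in V) => //=; by case: (_ < _)%N; rewrite ?andbF.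
rewrite cardsU (_ : B :&: C = set0) ?cards0 ?subn0 //.
apply/setP => p; rewrite !inE.
case pV: (p.2 \in V); rewrite ?andbF //=; by rewrite (disjointFr dVU pV) !andbF.
Qed.

Lemma collapse (F : T -> R) (P : pred T) (c : pred T) (B : T) :
  (forall A, P A = c A && (B == A)) ->
  \sum_(A : T) (if P A then F A else 0) = if c B then F B else 0.
Proof.
move=> HP; rewrite (bigD1 B) //= big1 ?addr0 => [|A nA]; first by rewrite HP eqxx andbT.
by rewrite HP eq_sym (negPf nA) andbF.
Qed.

Lemma wedgeA (x y z : E) : wedge (wedge x y) z = wedge x (wedge y z).
Proof.
apply/ffunP => U; rewrite !ffunE.
pose G S V C := x S * y V * z C.
transitivity (\sum_(S : T) \sum_(V : T) \sum_(C : T) \sum_(A : T)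
  (if ([disjoint A & C] && (A :|: C == U)) && ([disjoint S & V] && (S :|: V == A))
   then wsign R A C * wsign R S V * G S V C else 0)).
  transitivity (\sum_(A : T) \sum_(C : T) \sum_(S : T) \sum_(V : T)
  (if ([disjoint A & C] && (A :|: C == U)) && ([disjoint S & V] && (S :|: V == A))
   then wsign R A C * wsign R S V * G S V C else 0)).
    apply: eq_bigr => A _; rewrite big_mkcond; apply: eq_bigr => C _.
    case: ifP => PAC; last by rewrite big1 // => S _; rewrite big1 // => V _.
    rewrite ffunE mulr_sumr mulr_suml; apply: eq_bigr => S _.
    rewrite mulr_sumr mulr_suml big_mkcond; apply: eq_bigr => V _.
    by case: ifP => _; rewrite /G; ring.
  under eq_bigr => A _ do rewrite exchange_big.
  under eq_bigr => A _ do under eq_bigr => S _ do rewrite exchange_big.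
  rewrite exchange_big.
  under eq_bigr => S _ do rewrite exchange_big.
  by under eq_bigr => S _ do under eq_bigr => V _ do rewrite exchange_big.
transitivity (\sum_(S : T) \sum_(V : T) \sum_(C : T) \sum_(W : T)
  (if ([disjoint S & W] && (S :|: W == U)) && ([disjoint V & C] && (V :|: C == W))
   then wsign R S W * wsign R V C * G S V C else 0)); last first.
  symmetry.
  transitivity (\sum_(S : T) \sum_(W : T) \sum_(V : T) \sum_(C : T)
  (if ([disjoint S & W] && (S :|: W == U)) && ([disjoint V & C] && (V :|: C == W))
   then wsign R S W * wsign R V C * G S V C else 0)).
    apply: eq_bigr => S _; rewrite big_mkcond; apply: eq_bigr => W _.
    case: ifP => PSW; last by rewrite big1 // => V _; rewrite big1 // => C _.
    rewrite ffunE mulr_sumr; apply: eq_bigr => V _.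
    rewrite mulr_sumr big_mkcond; apply: eq_bigr => C _.
    by case: ifP => _; rewrite /G; ring.
  apply: eq_bigr => S _.
  rewrite exchange_big.
  by under eq_bigr => V _ do rewrite exchange_big.
apply: eq_bigr => S _; apply: eq_bigr => V _; apply: eq_bigr => C _.
rewrite (collapse (fun A => wsign R A C * wsign R S V * G S V C)
   (c := fun A => [disjoint A & C] && (A :|: C == U) && [disjoint S & V]) (B := S :|: V));
  last by move=> A; rewrite !andbA.
rewrite (collapse (fun W => wsign R S W * wsign R V C * G S V C)
   (c := fun W => [disjoint S & W] && (S :|: W == U) && [disjoint V & C]) (B := V :|: C));
  last by move=> W; rewrite !andbA.
rewrite disjUl disjUr setUA.
have [dSV|] := boolP [disjoint S & V]; last by rewrite !andbF.
have [dVC|] := boolP [disjoint V & C]; last by rewrite !andbF.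
have [dSC|] := boolP [disjoint S & C]; last by rewrite !andbF.
rewrite /= !andbT; case: ifP => // _.
rewrite !wsignE invUl // invUr // !exprD; ring.
Qed.


Lemma inv_swap (S V : T) : [disjoint S & V] -> (inv S V + inv V S)%N = (#|S| * #|V|)%N.
Proof.
move=> dSV; rewrite /inv.
set B := [set p : 'I_r * 'I_r | [&& p.1 \in V, p.2 \in S & _]].
have -> : #|B| = #|[set p : 'I_r * 'I_r | [&& p.1 \in S, p.2 \in V & (val p.1 < val p.2)%N]]|.
  rewrite -(card_preimset B (f := fun p : 'I_r * 'I_r => (p.2, p.1))); last first.
    by move=> [p1 p2] [q1 q2] /= [-> ->].
  by apply: eq_card => p; rewrite !inE /= andbCA.
rewrite -cardsX -cardsUI.
set C := _ :&: _.
have -> : C = set0.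
  apply/eqP; rewrite -subset0; apply/subsetP => p; rewrite !inE.
  case/andP => /and3P[_ _ h1] /and3P[_ _ h2].
  by move: (ltn_trans h1 h2); rewrite ltnn.
rewrite cards0 addn0; apply: eq_card => -[p1 p2]; rewrite !inE /=.
case p1S: (p1 \in S) => //=; case p2V: (p2 \in V) => //=.
have : p1 != p2 by apply: contraTneq p2V => <-; rewrite (disjointFr dSV p1S).
by rewrite neq_ltn orbC.
Qed.

Lemma wedgeC j k (x y : E) : homog j x -> homog k y ->
  wedge x y = ext_scale ((-1) ^+ (j * k)) (wedge y x).
Proof.
move=> hx hy; apply/ffunP => U; rewrite !ffunE mulr_sumr.
rewrite (exchange_big_dep (fun V => true)) //=; apply: eq_bigr => V _.
rewrite mulr_sumr; apply: eq_big => [S|S /andP[dSV _]].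
  by rewrite disjoint_sym setUC.
have [xS0|xSn] := eqVneq (x S) 0; first by rewrite xS0 !(mulr0, mul0r).
have [yV0|yVn] := eqVneq (y V) 0; first by rewrite yV0 !(mulr0, mul0r).
have cS : #|S| = j by apply/eqP; apply: contraNT xSn => h; apply/eqP; exact: hx S h.
have cV : #|V| = k by apply/eqP; apply: contraNT yVn => h; apply/eqP; exact: hy V h.
rewrite -cS -cV -(inv_swap dSV) !wsignE exprD.
have e : (-1) ^+ inv V S * (-1) ^+ inv V S = 1 :> R by rewrite -expr2 sqrr_sign.
transitivity ((-1) ^+ inv S V * ((-1) ^+ inv V S * (-1) ^+ inv V S) * x S * y V).
  by rewrite e mulr1.
ring.
Qed.

Definition vec (v : 'I_r -> R) : E := [ffun S => \sum_i v i * ext_e R i S].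

Lemma vecE v S : vec v S = \sum_i if S == [set i] then v i else 0.
Proof. by rewrite ffunE; apply: eq_bigr => i _; rewrite ffunE; case: ifP; rewrite ?mulr1 ?mulr0. Qed.

Lemma vec1 v i : vec v [set i] = v i.
Proof.
rewrite vecE (bigD1 i) //= eqxx big1 ?addr0 // => l nl.
by case: ifP => // /eqP/set1_inj il; move: nl; rewrite il eqxx.
Qed.

Lemma vec_homog v : homog 1 (vec v).
Proof.
move=> S nS; rewrite vecE big1 // => i _; case: ifP => // /eqP eS.
by move: nS; rewrite eS cards1.
Qed.

Lemma inv1 i (V : T) : inv [set i] V = #|[set t in V | (val t < val i)%N]|.
Proof.
rewrite /inv -[RHS](card_imset _ (f := fun t => (i, t))); last by move=> t1 t2 [].
apply: eq_card => -[p1 p2]; rewrite !inE /=.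
apply/idP/imsetP => [/and3P[/eqP -> p2V lt]|[t]]; first by exists p2; rewrite // inE p2V.
by rewrite inE => /andP[tV lt] [-> ->]; rewrite eqxx tV.
Qed.

Lemma wedge_vecE v (X : E) U : wedge (vec v) X U =
  \sum_(i in U) (-1) ^+ #|[set t in U | (val t < val i)%N]| * v i * X (U :\ i).
Proof.
rewrite ffunE.
under eq_bigr => S _ do under eq_bigr => V _ do rewrite vecE mulr_sumr mulr_suml.
under eq_bigr => S _ do rewrite exchange_big.
rewrite exchange_big [RHS]big_mkcond; apply: eq_bigr => i _.
rewrite (bigD1 [set i]) //= [X in _ + X]big1 ?addr0 => [|S nS]; last first.
  by rewrite big1 // => V _; rewrite (negPf nS) mulr0 mul0r.
under eq_bigr => V _ do rewrite eqxx.
case: ifP => iU.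
  rewrite (big_pred1 (U :\ i)) => [|V]; last first.
    rewrite /= disjoints1; apply/andP/eqP => [[iV /eqP <-]|->].
      by rewrite setU1K.
    by rewrite setD11 setD1K.
  rewrite wsignE inv1; congr (_ * _ * _); congr (_ ^+ _).
  by apply: eq_card => t; rewrite !inE; case: (eqVneq t i) => [->|] /=; rewrite ?ltnn ?andbF.
rewrite big1 // => V /andP[_ /eqP eU]; move: iU; by rewrite -eU setU11.
Qed.


Definition Wl (vs : seq ('I_r -> R)) : E := foldr (fun v X => wedge (vec v) X) (ext_one R r) vs.

Lemma Wl_cons v vs : Wl (v :: vs) = wedge (vec v) (Wl vs).
Proof. by []. Qed.

Lemma Wl_cat us ws : Wl (us ++ ws) = wedge (Wl us) (Wl ws).
Proof.
elim: us => [|u us IH] /=; first by rewrite wedge1l.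
by rewrite IH wedgeA.
Qed.

Lemma Wl_homog vs : homog (size vs) (Wl vs).
Proof.
elim: vs => [|v vs IH] /= S nS.
  by rewrite ffunE; case: eqP => // S0; move: nS; rewrite S0 cards0.
rewrite wedge_vecE big1 // => i iS; rewrite IH ?mulr0 //.
by apply: contra nS; rewrite (cardsD1 i S) iS add1n => /eqP ->.
Qed.

Lemma card_lt_ord n (a : 'I_n) : #|[set b : 'I_n | (val b < val a)%N]| = a.
Proof.
have le : (a <= n)%N by apply: ltnW.
have winj : injective (widen_ord le) by move=> c1 c2 e; apply: val_inj; exact: (congr1 val e).
transitivity #|(widen_ord le) @: [set: 'I_a]|; last first.
  by rewrite card_imset // cardsT card_ord.
apply: eq_card => b; rewrite inE; apply/idP/imsetP => [lt|[c _ ->]] /=.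
  exists (Ordinal lt); first by rewrite in_setT.
  by apply/eqP; rewrite -val_eqE /= eqxx.
exact: ltn_ord.
Qed.

End Ext.

Section Ext2.
Variable R : comPzRingType.
Variable r : nat.
Local Notation E := (ext R r).
Local Notation T := {set 'I_r}.

Lemma Wl_minor k (vs : seq ('I_r -> R)) (h : 'I_k -> 'I_r) :
  size vs = k -> (forall a b : 'I_k, (val (h a) < val (h b))%N = (val a < val b)%N) ->
  Wl vs (h @: setT) = \det (\matrix_(i < k, j < k) (nth (fun _ => 0) vs j) (h i)).
Proof.
elim: k vs h => [|k IH] [|v vs] h //= sz hmono.
  have -> : h @: setT = set0.
    by apply/eqP; rewrite -subset0; apply/subsetP => t /imsetP[[]].
  by rewrite ffunE eqxx det_mx00.
case: sz => sz.
have hinj : injective h.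
  move=> a b e; apply/eqP; rewrite -val_eqE; case: (ltngtP (val a) (val b)) => // lt; [move: (hmono a b) | move: (hmono b a)]; by rewrite lt e ltnn.
rewrite wedge_vecE big_imset; last by move=> a b _ _; apply: hinj.
rewrite (expand_det_col _ ord0).
rewrite (eq_bigl (fun _ => true)) => [|a]; last by rewrite inE.
apply: eq_bigr => a _; rewrite !mxE /cofactor addn0.
have -> : #|[set t in h @: setT | (val t < val (h a))%N]| = a.
  rewrite -[RHS]card_lt_ord -(card_imset _ hinj); apply: eq_card => t; rewrite !inE.
  apply/andP/imsetP => [[/imsetP[b _ ->] lt]|[b]]; first by exists b; rewrite // inE -hmono.
  by rewrite inE => lt ->; split; [apply: imset_f; rewrite inE | rewrite hmono].
have -> : h @: setT :\ h a = (fun b => h (lift a b)) @: setT.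
  apply/setP => t; rewrite in_setD1; apply/andP/imsetP => [[nt /imsetP[b _ tb]]|[b _ ->]].
    subst t; case: (unliftP a b) => [c ->|ab]; first by exists c.
    by move: nt; rewrite ab eqxx.
  split; last by apply: imset_f; rewrite inE.
  by rewrite (inj_eq hinj) eq_sym neq_lift.
rewrite (IH vs (fun b => h (lift a b))) //; last first.
  by move=> b1 b2; rewrite hmono /= ltnNge leq_bump2 -ltnNge.
rewrite mulrCA mulrA; congr (_ * _ * _).
congr (\det _); apply/matrixP => i j; rewrite !mxE lift0 //.
Qed.


Lemma Wl_top (vs : seq ('I_r -> R)) : size vs = r ->
  Wl vs setT = \det (\matrix_(i < r, j < r) (nth (fun _ => 0) vs j) i).
Proof.
move=> sz; have := @Wl_minor r vs (fun i : 'I_r => i) sz (fun a b => erefl).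
by rewrite imset_id.
Qed.

Definition sg (S : T) (i : 'I_r) : R := (-1) ^+ #|[set t in S | (val t < val i)%N]|.

Lemma sgU1 (S : T) i : i \notin S -> sg (i |: S) i = sg S i.
Proof.
move=> iS; rewrite /sg; congr (_ ^+ _); apply: eq_card => t; rewrite !inE.
by case: (eqVneq t i) => [->|] /=; rewrite ?ltnn ?andbF.
Qed.

Lemma sgD1 (S : T) l : sg (S :\ l) l = sg S l.
Proof.
rewrite /sg; congr (_ ^+ _); apply: eq_card => t; rewrite !inE.
by case: (eqVneq t l) => [->|] /=; rewrite ?ltnn ?andbF.
Qed.

Lemma cntU1 (S : T) (i l : 'I_r) : i \notin S ->
  #|[set t in i |: S | (val t < val l)%N]| = ((val i < val l) + #|[set t in S | (val t < val l)%N]|)%N.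
Proof.
move=> iS; rewrite (cardsD1 i) !inE eqxx /=; congr (_ + _)%N; apply: eq_card => t; rewrite !inE.
by case: (eqVneq t i) => [->|] //=; rewrite (negPf iS).
Qed.

Lemma cntD1 (S : T) (i l : 'I_r) : l \in S ->
  #|[set t in S | (val t < val i)%N]| = ((val l < val i) + #|[set t in S :\ l | (val t < val i)%N]|)%N.
Proof.
move=> lS; rewrite (cardsD1 l) !inE lS /=; congr (_ + _)%N; apply: eq_card => t; rewrite !inE.
by case: (eqVneq t l).
Qed.

Lemma sg_cross (S : T) (i l : 'I_r) : i \notin S -> l \in S ->
  sg S i * sg (i |: S) l = - (sg S l * sg (S :\ l) i).
Proof.
move=> iS lS; rewrite /sg cntU1 // (cntD1 i lS) !exprD.
have il : i != l by apply: contraNneq iS => ->.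
have : ((val i < val l) + (val l < val i))%N = 1%N.
  by case: (ltngtP (val i) (val l)) => // e; move: il; rewrite (val_inj e) eqxx.
case: (val i < val l)%N; case: (val l < val i)%N => // _; rewrite ?expr0 ?expr1; ring.
Qed.

Lemma wedge_vec_sg v (X : E) U : wedge (vec v) X U =
  \sum_(i in U) sg U i * v i * X (U :\ i).
Proof. exact: wedge_vecE. Qed.

Variable f : 'I_r -> R.

Lemma koszul_dE (x : E) S : koszul_d f x S =
  \sum_(i | i \notin S) sg S i * f i * x (i |: S).
Proof. by rewrite ffunE. Qed.

Lemma leibniz v (X : E) S : koszul_d f (wedge (vec v) X) S =
  (\sum_i v i * f i) * X S - wedge (vec v) (koszul_d f X) S.
Proof.
pose A := \sum_(i | i \notin S) v i * f i * X S.
pose C := \sum_(i | i \notin S) \sum_(l in S)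
   sg S i * sg (i |: S) l * f i * v l * X ((i |: S) :\ l).
transitivity (A + C).
  rewrite koszul_dE /A /C -big_split; apply: eq_bigr => i iS.
  rewrite wedge_vec_sg (big_setD1 i (setU11 i S)) (setU1K iS) sgU1 // mulrDr.
  congr (_ + _).
    have e : sg S i * sg S i = 1 by rewrite /sg -expr2 sqrr_sign.
    transitivity (sg S i * sg S i * v i * f i * X S); last by rewrite e mul1r.
    ring.
  rewrite mulr_sumr; apply: eq_bigr => l _; ring.
rewrite wedge_vec_sg (bigID (fun i => i \in S)) /= mulrDl.
have -> : \sum_(l in S) sg S l * v l * koszul_d f X (S :\ l) =
   \sum_(i in S) v i * f i * X S - C.
  rewrite /C exchange_big /= -sumrB; apply: eq_bigr => l lS.
  rewrite koszul_dE (bigD1 l) /=; last by rewrite setD11.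
  rewrite (setD1K lS) sgD1 mulrDr.
  have e : sg S l * sg S l = 1 by rewrite /sg -expr2 sqrr_sign.
  rewrite -sumrN; congr (_ + _).
    transitivity (sg S l * sg S l * v l * f l * X S); first by ring.
    by rewrite e mul1r.
  rewrite mulr_sumr (eq_bigl (fun i => i \notin S)) => [|i]; last first.
    by rewrite !inE; case: (eqVneq i l) => [->|_] /=; rewrite ?lS ?andbF ?andbT.
  apply: eq_bigr => i iS.
  have il : i != l by apply: contraNneq iS => ->.
  have -> : (i |: S) :\ l = i |: (S :\ l).
    apply/setP => t; rewrite !inE; case: (eqVneq t l) => [->|] //=.
    by rewrite eq_sym (negPf il).
  rewrite (sg_cross iS lS); ring.
rewrite /A !mulr_suml; ring.
Qed.

End Ext2.

Section Ideals.
Variable R : comPzRingType.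

Lemma ideal_gen_ideal (G : R -> Prop) : is_ideal (ideal_gen G).
Proof.
split.
- by move=> J [J0 _ _] _.
- by move=> x y hx hy J hJ hG; case: (hJ) => _ hD _; apply: hD; [apply: hx | apply: hy].
- by move=> b x hx J hJ hG; case: (hJ) => _ _ hM; apply: hM; apply: hx.
Qed.

Lemma ideal_gen_sub (G : R -> Prop) x : G x -> ideal_gen G x.
Proof. by move=> gx J _ hG; apply: hG. Qed.

Lemma ideal_gen_min (G J : R -> Prop) : is_ideal J -> (forall y, G y -> J y) ->
  forall x, ideal_gen G x -> J x.
Proof. by move=> hJ hG x hx; apply: hx. Qed.

Lemma ideal0 (J : R -> Prop) : is_ideal J -> J 0.
Proof. by case. Qed.
Lemma idealD (J : R -> Prop) x y : is_ideal J -> J x -> J y -> J (x + y).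
Proof. by case=> _ h _; apply: h. Qed.
Lemma idealM (J : R -> Prop) b x : is_ideal J -> J x -> J (b * x).
Proof. by case=> _ _ h; apply: h. Qed.
Lemma idealN (J : R -> Prop) x : is_ideal J -> J x -> J (- x).
Proof. by move=> hJ hx; rewrite -mulN1r; apply: idealM. Qed.
End Ideals.

Fixpoint allP (R : comPzRingType) (r : nat) (P : ('I_r -> R) -> Prop) (vs : seq ('I_r -> R)) : Prop :=
  match vs with [::] => True | v :: vs => P v /\ allP P vs end.

Lemma allP_cat (R : comPzRingType) (r : nat) (P : ('I_r -> R) -> Prop) us ws :
  allP P us -> allP P ws -> allP P (us ++ ws).
Proof. by elim: us => [|u us IH] //= [pu pus] pws; split => //; apply: IH. Qed.

Lemma allP_nth (R : comPzRingType) (r : nat) (P : ('I_r -> R) -> Prop) vs k :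
  allP P vs -> (k < size vs)%N -> P (nth (fun _ => 0) vs k).
Proof.
by elim: vs k => [|v vs IH] [|k] //= [pv pvs] lt //; apply: IH.
Qed.

Section Main.
Variables (R : comPzRingType) (r s : nat).
Variables (f : 'I_r -> R) (a : 'I_s -> R) (c : 'M[R]_(r, s)).
Hypothesis ha : forall j : 'I_s, a j = \sum_(i : 'I_r) c i j * f i.
Local Notation E := (ext R r).
Local Notation T := {set 'I_r}.

Definition rel (v : 'I_r -> R) := quot_relation f a v.
Definition cyc1 (v : 'I_r -> R) := \sum_i v i * f i = 0.
Definition iscol (v : 'I_r -> R) := exists j, v = (fun i => c i j).

Lemma vec_ext (u w : 'I_r -> R) : (forall i, u i = w i) -> vec u = vec w.
Proof. by move=> e; apply/ffunP => S; rewrite !ffunE; apply: eq_bigr => i _; rewrite e. Qed.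

Lemma vec_add (u w : 'I_r -> R) : vec (fun i => u i + w i) = ext_add (vec u) (vec w).
Proof. by apply/ffunP => S; rewrite !ffunE -big_split; apply: eq_bigr => i _; rewrite mulrDl. Qed.

Lemma vec_scale b (u : 'I_r -> R) : vec (fun i => b * u i) = ext_scale b (vec u).
Proof. by apply/ffunP => S; rewrite !ffunE mulr_sumr; apply: eq_bigr => i _; rewrite mulrA. Qed.

Lemma vec0 : vec (fun _ : 'I_r => 0) = ext0 R r.
Proof. by apply/ffunP => S; rewrite !ffunE big1 // => i _; rewrite mul0r. Qed.

Lemma zetaE j : zeta c j = vec (fun i => c i j).
Proof. by []. Qed.

Lemma rel_ex v : rel v -> exists b : 'I_s -> R, \sum_i v i * f i = \sum_j b j * a j.
Proof.
move=> hv; pose J := fun y : R => exists b : 'I_s -> R, y = \sum_j b j * a j.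
have hJ : is_ideal J.
  split.
  - by exists (fun _ => 0); rewrite big1 // => j _; rewrite mul0r.
  - move=> x y [b1 ->] [b2 ->]; exists (fun j => b1 j + b2 j).
    by rewrite -big_split; apply: eq_bigr => j _; rewrite mulrDl.
  - move=> b x [b1 ->]; exists (fun j => b * b1 j).
    by rewrite mulr_sumr; apply: eq_bigr => j _; rewrite mulrA.
have := hv J hJ; case.
  move=> y [j ->]; exists (fun l => if l == j then 1 else 0).
  rewrite (bigD1 j) //= eqxx mul1r big1 ?addr0 // => l nl.
  by rewrite (negPf nl) mul0r.
by move=> b e; exists b.
Qed.

Lemma rel_col j : rel (fun i => c i j).
Proof. by rewrite /rel /quot_relation -ha; apply: ideal_gen_sub; exists j. Qed.

Lemma rel_cyc v : cyc1 v -> rel v.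
Proof. by rewrite /rel /quot_relation /cyc1 => ->; apply: ideal0; apply: ideal_gen_ideal. Qed.

Inductive Aset : E -> Prop :=
 | A_W vs : allP rel vs -> Aset (Wl vs)
 | A_add x y : Aset x -> Aset y -> Aset (ext_add x y)
 | A_scale b x : Aset x -> Aset (ext_scale b x).

Lemma Aset_wedge x y : Aset x -> Aset y -> Aset (wedge x y).
Proof.
move=> hx hy; elim: hx => [us hus|x1 x2 _ IH1 _ IH2|b x1 _ IH].
- elim: hy => [ws hws|y1 y2 _ IH1 _ IH2|b y1 _ IH].
  + by rewrite -Wl_cat; apply: A_W; apply: allP_cat.
  + by rewrite wedge_addr; apply: A_add.
  + by rewrite wedge_scaler; apply: A_scale.
- by rewrite wedge_addl; apply: A_add.
- by rewrite wedge_scalel; apply: A_scale.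
Qed.

Lemma Aset_closed : Defs.subalg_closed Aset.
Proof.
split.
- by have := @A_W [::] I.
- by move=> x y; apply: A_add.
- by move=> b x; apply: A_scale.
- exact: Aset_wedge.
Qed.

Lemma Aset_vec v : rel v -> Aset (vec v).
Proof. by move=> hv; rewrite -(wedge1r (vec v)); have := @A_W [:: v]; apply. Qed.

Lemma Gamma_Aset x : Gamma c x -> Aset x.
Proof. by move=> hx; apply: hx; [exact: Aset_closed | move=> y [j ->]; apply: Aset_vec; apply: rel_col]. Qed.

Lemma Z1_vec x : Z1 f x -> x = vec (fun i => x [set i]) /\ cyc1 (fun i => x [set i]).
Proof.
case=> hx dx; split.
  apply/ffunP => S; rewrite vecE.
  case: (boolP (#|S| == 1%N)) => [/cards1P[i ->]|nS]; last first.
    rewrite hx // big1 // => i _; case: eqP => // eS; move: nS; rewrite eS cards1 eqxx //.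
  rewrite (bigD1 i) //= eqxx big1 ?addr0 // => l nl.
  by case: eqP => // /set1_inj il; move: nl; rewrite il eqxx.
have := congr1 (fun y : E => y set0) dx; rewrite koszul_dE ffunE /cyc1 => e.
rewrite -[RHS]e; apply: eq_big => [i|i _]; first by rewrite inE.
rewrite /sg.
have -> : [set t in (set0 : T) | (val t < val i)%N] = set0.
  by apply/eqP; rewrite -subset0; apply/subsetP => t; rewrite !inE.
by rewrite cards0 expr0 mul1r setU0 mulrC.
Qed.


Lemma Z1alg_Aset x : Z1alg f x -> Aset x.
Proof.
move=> hx; apply: hx; first exact: Aset_closed.
move=> y /Z1_vec [e hc]; rewrite e; apply: Aset_vec; exact: rel_cyc.
Qed.

Lemma Aset_top x : Aset x -> Fitt0_quot f a (x setT).
Proof.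
have hI := @ideal_gen_ideal R (fun c0 => exists M : 'M[R]_r,
     (forall k : 'I_r, quot_relation f a (fun i => M i k)) /\ c0 = \det M).
elim=> [vs hvs|x1 x2 _ IH1 _ IH2|b x1 _ IH].
- case: (eqVneq (size vs) r) => sz.
    rewrite Wl_top //; apply: ideal_gen_sub.
    exists (\matrix_(i < r, j < r) (nth (fun _ => 0) vs j) i); split => // k.
    rewrite /quot_relation.
    have -> : \sum_i (\matrix_(i0 < r, j < r) nth (fun=> 0) vs j i0) i k * f i
       = \sum_i nth (fun=> 0) vs k i * f i by apply: eq_bigr => i _; rewrite mxE.
    by have := @allP_nth R r rel vs k hvs; rewrite sz => /(_ (ltn_ord k)).
  rewrite (@Wl_homog R r vs setT); first exact: (ideal0 hI).
  by rewrite cardsT card_ord eq_sym.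
- by rewrite ffunE; apply: (idealD hI).
- by rewrite ffunE; apply: (idealM _ hI).
Qed.

Lemma prod_top_Fitt (B : E -> Prop) : (forall y, B y -> Aset y) ->
  forall x, prod_top (Gamma c) B x -> Fitt0_quot f a x.
Proof.
move=> hB; apply: ideal_gen_min; first exact: ideal_gen_ideal.
move=> y [j [x [z [_ [gx _] [bz _] ->]]]].
apply: Aset_top; apply: Aset_wedge; [exact: Gamma_Aset | exact: hB].
Qed.


Inductive Q : E -> Prop :=
 | Q_gen gs zs : allP iscol gs -> allP cyc1 zs -> Q (wedge (Wl gs) (Wl zs))
 | Q_add x y : Q x -> Q y -> Q (ext_add x y)
 | Q_scale b x : Q x -> Q (ext_scale b x).

Lemma Q_zeta j X : Q X -> Q (wedge (vec (fun i => c i j)) X).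
Proof.
elim=> [gs zs hg hz|x y _ IH1 _ IH2|b x _ IH].
- rewrite -wedgeA -Wl_cons; apply: Q_gen => //; split => //; by exists j.
- by rewrite wedge_addr; apply: Q_add.
- by rewrite wedge_scaler; apply: Q_scale.
Qed.

Lemma Q_cyc z X : cyc1 z -> Q X -> Q (wedge (vec z) X).
Proof.
move=> hz; elim=> [gs zs hg hzs|x y _ IH1 _ IH2|b x _ IH].
- rewrite -wedgeA (wedgeC (@vec_homog R r z) (@Wl_homog R r gs)) wedge_scalel wedgeA -Wl_cons.
  by apply: Q_scale; apply: Q_gen.
- by rewrite wedge_addr; apply: Q_add.
- by rewrite wedge_scaler; apply: Q_scale.
Qed.

Lemma Q_sum (l : seq 'I_s) (b : 'I_s -> R) X : Q X ->
  Q (wedge (vec (fun i => \sum_(j <- l) c i j * b j)) X).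
Proof.
move=> hX; elim: l => [|j l IH].
  rewrite (@vec_ext _ (fun _ => 0)) => [|i]; last by rewrite big_nil.
  rewrite vec0 wedge0l.
  have -> : ext0 R r = ext_scale 0 X by apply/ffunP => S; rewrite !ffunE mul0r.
  exact: Q_scale.
rewrite (@vec_ext _ (fun i => b j * c i j + \sum_(j <- l) c i j * b j)) => [|i]; last first.
  by rewrite big_cons mulrC.
rewrite vec_add vec_scale wedge_addl wedge_scalel.
by apply: Q_add => //; apply: Q_scale; apply: Q_zeta.
Qed.

Lemma Q_vec v X : rel v -> Q X -> Q (wedge (vec v) X).
Proof.
move=> /rel_ex [b e] hX.
pose sp := fun i => \sum_(j <- index_enum 'I_s) c i j * b j.
pose z0 := fun i => v i - sp i.
have hz : cyc1 z0.
  rewrite /cyc1 /z0.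
  under eq_bigr => i _ do rewrite mulrBl.
  rewrite sumrB e /sp.
  under [X in _ - X]eq_bigr => i _ do rewrite mulr_suml.
  rewrite exchange_big /=.
  under [X in _ - X]eq_bigr => j _ do under eq_bigr => i _ do rewrite -mulrA [b j * _]mulrC mulrA.
  under [X in _ - X]eq_bigr => j _ do rewrite -mulr_suml -ha.
  by apply/eqP; rewrite subr_eq0; apply/eqP; apply: eq_bigr => j _; rewrite mulrC.
rewrite (@vec_ext v (fun i => sp i + z0 i)) => [|i]; last by rewrite /z0 addrC subrK.
rewrite vec_add wedge_addl; apply: Q_add; first exact: Q_sum.
exact: Q_cyc.
Qed.

Lemma Q_W vs : allP rel vs -> Q (Wl vs).
Proof.
elim: vs => [|v vs IH] /=.
  by move=> _; rewrite -(wedge1l (ext_one R r)); apply: (@Q_gen [::] [::]).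
by case=> hv hvs; apply: Q_vec => //; apply: IH.
Qed.

Lemma Gamma_Wl gs : allP iscol gs -> Gamma c (Wl gs).
Proof.
move=> hg P [h1 _ _ hW] hG; elim: gs hg => [|g gs IH] /= //.
case=> [[j ->] hgs]; apply: hW; last exact: IH.
by apply: hG; exists j.
Qed.

Lemma Q_top (B : E -> Prop) : (forall zs, allP cyc1 zs -> B (Wl zs)) ->
  forall X, Q X -> prod_top (Gamma c) B (X setT).
Proof.
move=> hB.
have hI := @ideal_gen_ideal R (fun c0 => exists (j : nat) (x y : ext R r),
     [/\ (j <= r)%N, Gamma c x /\ homog j x, B y /\ homog (r - j) y & c0 = wedge x y setT]).
move=> X; elim=> [gs zs hg hz|x y _ IH1 _ IH2|b x _ IH].
- case: (eqVneq (size gs + size zs)%N r) => sz.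
    apply: ideal_gen_sub; exists (size gs), (Wl gs), (Wl zs); split => //.
    + by rewrite -[X in (_ <= X)%N]sz leq_addr.
    + by split; [exact: Gamma_Wl | exact: Wl_homog].
    + split; [exact: hB | move: sz; set m := size gs; set n := size zs => sz].
      by rewrite (_ : (r - m)%N = n); [exact: Wl_homog | apply/eqP; rewrite -sz addKn].
  rewrite -Wl_cat (@Wl_homog R r (gs ++ zs) setT); first exact: (ideal0 hI).
  by rewrite cardsT card_ord size_cat eq_sym.
- by rewrite ffunE; apply: (idealD hI).
- by rewrite ffunE; apply: (idealM _ hI).
Qed.

Lemma allP_map (P : ('I_r -> R) -> Prop) (T0 : Type) (F : T0 -> 'I_r -> R) l :
  (forall k, P (F k)) -> allP P (map F l).
Proof. by move=> h; elim: l => //= k l IH; split. Qed.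

Lemma Fitt_prod_top (B : E -> Prop) : (forall zs, allP cyc1 zs -> B (Wl zs)) ->
  forall x, Fitt0_quot f a x -> prod_top (Gamma c) B x.
Proof.
move=> hB; apply: ideal_gen_min; first exact: ideal_gen_ideal.
move=> y [M [hM ->]].
pose vs := [seq (fun i => M i k) | k <- enum 'I_r].
have szv : size vs = r by rewrite size_map size_enum_ord.
have -> : \det M = Wl vs setT.
  rewrite Wl_top //; congr (\det _); apply/matrixP => i j; rewrite mxE.
  by rewrite (nth_map j) ?size_enum_ord // nth_ord_enum.
apply: Q_top => //; apply: Q_W; exact: allP_map.
Qed.

End Main.

Section Fin.
Variables (R : comPzRingType) (r s : nat).
Variables (f : 'I_r -> R) (a : 'I_s -> R) (c : 'M[R]_(r, s)).
Hypothesis ha : forall j : 'I_s, a j = \sum_(i : 'I_r) c i j * f i.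
Local Notation E := (ext R r).

Lemma d_one S : koszul_d f (ext_one R r) S = 0.
Proof.
rewrite koszul_dE big1 // => i _; rewrite ffunE.
have -> : (i |: S == set0) = false.
  by apply/negbTE/set0Pn; exists i; rewrite setU11.
by rewrite mulr0.
Qed.

Lemma d_vec_wedge z (X : E) : cyc1 f z -> (forall S, koszul_d f X S = 0) ->
  forall S, koszul_d f (wedge (vec z) X) S = 0.
Proof.
move=> hz hX S; rewrite leibniz hz mul0r sub0r.
rewrite wedge_vec_sg big1 ?oppr0 // => i _; by rewrite hX mulr0.
Qed.

Lemma Wl_cycles zs : allP (cyc1 f) zs -> cycles f (Wl zs).
Proof.
rewrite /cycles; elim: zs => [|z zs IH] /=.
  by move=> _; apply/ffunP => S; rewrite d_one [RHS]ffunE.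
case=> hz hzs; apply/ffunP => S; rewrite [RHS]ffunE.
apply: d_vec_wedge => // S'; by rewrite (IH hzs) ffunE.
Qed.

Lemma vec_Z1 z : cyc1 f z -> Z1 f (vec z).
Proof.
move=> hz; split; first exact: vec_homog.
apply/ffunP => S; rewrite [RHS]ffunE -(wedge1r (vec z)).
by apply: d_vec_wedge => // S'; rewrite d_one.
Qed.

Lemma Wl_Z1alg zs : allP (cyc1 f) zs -> Z1alg f (Wl zs).
Proof.
move=> hzs P [h1 _ _ hW] hG; elim: zs hzs => [|z zs IH] //= [hz hzs].
apply: hW; last exact: IH.
by apply: hG; apply: vec_Z1.
Qed.

Lemma mono_prod_top (A B B' : E -> Prop) : (forall y, B y -> B' y) ->
  forall x, prod_top A B x -> prod_top A B' x.
Proof.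
move=> hB; apply: ideal_gen_min; first exact: ideal_gen_ideal.
move=> y [j [x [z [hj [ax hx] [bz hz] ->]]]].
apply: ideal_gen_sub; exists j, x, z; split => //; split => //; exact: hB.
Qed.

Lemma main_result :
  (forall x : R, prod_top (Gamma c) (Z1alg f) x <-> Fitt0_quot f a x) /\
  ((forall z : ext R r, cycles f z -> Z1alg f z) ->
     forall x : R, Kitt c f x <-> Fitt0_quot f a x).
Proof.
split.
  move=> x; split.
    by apply: prod_top_Fitt => //; exact: Z1alg_Aset.
  by apply: Fitt_prod_top => //; exact: Wl_Z1alg.
move=> hcyc x; split.
  move=> hx; apply: (prod_top_Fitt ha (B := Z1alg f)); first exact: Z1alg_Aset.
  exact: (mono_prod_top hcyc).
by apply: Fitt_prod_top => //; exact: Wl_cycles.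
Qed.
End Fin.

Unset Implicit Arguments.

Theorem proposition4p18 (R : comPzRingType) (r s : nat)
  (f : 'I_r -> R) (a : 'I_s -> R) (c : 'M[R]_(r, s))
  (ha : forall j : 'I_s, a j = \sum_(i : 'I_r) c i j * f i) :
  (forall x : R, prod_top (Gamma c) (Z1alg f) x <-> Fitt0_quot f a x) /\
  ((forall z : ext R r, cycles f z -> Z1alg f z) ->
     forall x : R, Kitt c f x <-> Fitt0_quot f a x).
Proof. exact: (main_result ha). Qed.
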